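(* Let $N\ge1$ and $T_{\rm poll}\ge 1$ be integers, and let $\tau^1,\dots,\tau^N$ be i.i.d. geometric random variables with parameter $p$, i.e. $\mathbb P(\tau^j>t)=(1-p)^t$ for all $t\in\mathbb N\cup\{0\}$. Define $$M=\min\{m\ge 1:\ \exists\, j\in\{1,\dots,N\}\text{ such that }\tau^j\le mT_{\rm poll}\},\qquad K=\min\{j\in\{1,\dots,N\}:\ \tau^j\le MT_{\rm poll}\},$$ $$\xi=(N-1)(M-1)T_{\rm poll}+(K-1)T_{\rm poll}+\tau^K.$$ Then $\xi$ has the same law as $\tau^1$. *)

(* Defs.v *)
From HB Require Import structures.
From mathcomp Require Import all_boot all_order all_algebra.
From mathcomp Require Import all_classical all_reals all_analysis.
Set Implicit Arguments. Unset Strict Implicit. Unset Printing Implicit Defensive.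
Import Order.TTheory GRing.Theory Num.Theory.
Local Open Scope classical_set_scope.
Local Open Scope ring_scope.

(* least n such that P n (0 if no such n exists) *)
Definition least (P : pred nat) : nat :=
  match pselect (exists n, P n) with
  | left h => ex_minn h
  | right _ => 0%N
  end.

(* x j = tau^j (values for j in 1..N are relevant) *)
Definition Mpoll (N Tpoll : nat) (x : nat -> nat) : nat :=
  least (fun m => (1 <= m)%N && [exists j : 'I_N, x j.+1 <= m * Tpoll]%N).

Definition Kpoll (N Tpoll : nat) (x : nat -> nat) : nat :=
  least (fun j => (1 <= j <= N)%N && (x j <= Mpoll N Tpoll x * Tpoll)%N).

Definition xi (N Tpoll : nat) (x : nat -> nat) : nat :=
  ((N - 1) * (Mpoll N Tpoll x - 1) * Tpoll
   + (Kpoll N Tpoll x - 1) * Tpoll + x (Kpoll N Tpoll x))%N.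

(* mutual independence of tau^1, ..., tau^N (nat-valued; every subset of nat
   is measurable for the discrete sigma-algebra): product rule for all
   families of events {tau^j \in A_j}; taking A_j = setT recovers every
   finite subfamily. *)
Definition mutually_independent d (Omega : measurableType d) (R : realType)
  (P : probability Omega R) (N : nat) (tau : nat -> Omega -> nat) : Prop :=
  forall A : nat -> set nat,
    P [set w | forall j, (1 <= j <= N)%N -> A j (tau j w)]
    = (\prod_(1 <= j < N.+1) P (tau j @^-1` A j))%E.

(* Main.v *)
Require Import Defs.
From HB Require Import structures.
From mathcomp Require Import all_boot all_order all_algebra.
From mathcomp Require Import all_classical all_reals all_analysis.
From mathcomp Require Import zify.
Import Order.TTheory GRing.Theory Num.Theory.
Local Open Scope classical_set_scope.
Local Open Scope ring_scope.

Lemma leastP {Q : pred nat} : (exists n, Q n) ->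
  Q (least Q) /\ forall n, Q n -> (least Q <= n)%N.
Proof.
rewrite /least; case: pselect => // h _.
by case: ex_minnP.
Qed.

Section Comb.
Variables (N T : nat) (hN : (1 <= N)%N) (hT : (1 <= T)%N).
Variable x : nat -> nat.

Local Open Scope nat_scope.

Lemma Mprop : 1 <= Mpoll N T x /\ (exists2 j, 1 <= j <= N & x j <= Mpoll N T x * T)
  /\ forall m j, 1 <= m -> 1 <= j <= N -> x j <= m * T -> Mpoll N T x <= m.
Proof.
have ex : exists m, (1 <= m) && [exists j : 'I_N, x j.+1 <= m * T].
  exists (x 1).+1; apply/andP; split => //; apply/existsP.
  exists (Ordinal hN) => /=; nia.
have [/andP [h1 /existsP [j hj]] h2] := leastP ex.
rewrite /Mpoll; split => //; split.
  by exists j.+1 => //; rewrite ltn_ord.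
move=> m i m1 /andP [i1 iN] hi; apply: h2; rewrite m1 /=; apply/existsP.
have iN' : i.-1 < N by lia.
exists (Ordinal iN') => /=; rewrite prednK //.
Qed.

Lemma Kprop : 1 <= Kpoll N T x <= N /\ x (Kpoll N T x) <= Mpoll N T x * T
  /\ forall j, 1 <= j <= N -> x j <= Mpoll N T x * T -> Kpoll N T x <= j.
Proof.
have [_ [[j j1 jx] _]] := Mprop.
have ex : exists j, (1 <= j <= N) && (x j <= Mpoll N T x * T).
  by exists j; rewrite j1 jx.
have [/andP [h1 h3] h2] := leastP ex.
rewrite /Kpoll; split => //; split => // i i1 ix; apply: h2; by rewrite i1 ix.
Qed.

Lemma xi_ext y : (forall j, 1 <= j <= N -> x j = y j) -> xi N T x = xi N T y.
Proof.
move=> H.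
have eM : Mpoll N T x = Mpoll N T y.
  rewrite /Mpoll; congr least; apply: funext => m; congr (_ && _).
  apply: eq_existsb => j; rewrite H //; rewrite ltn_ord; lia.
have eK : Kpoll N T x = Kpoll N T y.
  rewrite /Kpoll; congr least; apply: funext => j.
  case: (boolP (1 <= j <= N)) => //= hj; by rewrite H // eM.
have [hK _] := Kprop.
by rewrite /xi eM eK H // -eK.
Qed.


Lemma divuniq (D u u' c c' : nat) : c < D -> c' < D -> u * D + c = u' * D + c' ->
  u = u' /\ c = c'.
Proof.
move=> hc hc' E.
have D0 : 0 < D by lia.
have e1 := congr1 (divn^~ D) E; have e2 := congr1 (modn^~ D) E.
move: e1 e2 => /=; rewrite !divnMDl // !modnMDl !divn_small // !modn_small //.
by rewrite !addn0 => -> ->.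
Qed.

Lemma xi_fwd a b c : b < N -> c < T ->
  (forall j, 1 <= j <= N -> (j <= b -> a.+1 * T < x j) /\ (j = b.+1 -> x j = a * T + c.+1)
     /\ (b.+1 < j -> a * T < x j)) ->
  xi N T x = (N * a + b) * T + c.+1.
Proof.
move=> hb hc H.
have [M1 [[j j1 jx] Mmin]] := Mprop.
have low : forall j, 1 <= j <= N -> a * T < x j.
  move=> i hi; have [h1 [h2 h3]] := H i hi.
  case: (ltngtP i b.+1) => hib.
  - have := h1 ltac:(lia); nia.
  - exact: h3.
  - rewrite (h2 hib); lia.
have eM : Mpoll N T x = a.+1.
  apply/eqP; rewrite eqn_leq; apply/andP; split.
    have hb1 : 1 <= b.+1 <= N by lia.
    apply: (Mmin _ b.+1 (ltn0Sn a) hb1).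
    have [_ [h2 _]] := H b.+1 hb1; rewrite h2 //; nia.
  have := low j j1; move: jx; set M := Mpoll N T x => jx lj.
  have : a * T < M * T by exact: (leq_trans lj jx).
  by rewrite ltn_mul2r; case/andP => _.
have [K1 [Kx Kmin]] := Kprop.
have eK : Kpoll N T x = b.+1.
  apply/eqP; rewrite eqn_leq; apply/andP; split.
    apply: Kmin; first lia.
    have [_ [h2 _]] := H b.+1 ltac:(lia); rewrite h2 // eM; nia.
  rewrite ltnNge; apply/negP => hKb.
  have [h1 _] := H _ K1; have := h1 hKb; rewrite -eM; lia.
have [_ [h2 _]] := H b.+1 ltac:(lia).
rewrite /xi eM eK h2 //; nia.
Qed.

Lemma xi_bwd a b c : (forall j, 1 <= j <= N -> 0 < x j) -> b < N -> c < T ->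
  xi N T x = (N * a + b) * T + c.+1 ->
  (forall j, 1 <= j <= N -> (j <= b -> a.+1 * T < x j) /\ (j = b.+1 -> x j = a * T + c.+1)
     /\ (b.+1 < j -> a * T < x j)).
Proof.
move=> pos hb hc E.
have [M1 [_ Mmin]] := Mprop.
have [K1 [Kx Kmin]] := Kprop.
move: E Mmin Kmin Kx M1 K1; rewrite /xi.
set M := Mpoll N T x; set K := Kpoll N T x => E Mmin Kmin Kx M1 K1.
have low : forall j, 1 <= j <= N -> (M - 1) * T < x j.
  move=> j hj; case: (ltngtP M 1) => hM; first lia.
    rewrite ltnNge; apply/negP => hx.
    have := Mmin (M - 1) j ltac:(lia) hj hx; lia.
  rewrite hM /=; exact: pos.
have hi : forall j, 1 <= j <= N -> j < K -> M * T < x j.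
  move=> j hj hjK; rewrite ltnNge; apply/negP => hx.
  have := Kmin j hj hx; lia.
have lK := low K K1.
have E' : (N * a + b) * T + c = (N * (M - 1) + (K - 1)) * T + (x K - (M - 1) * T - 1).
  nia.
have hMT : M * T = (M - 1) * T + T by rewrite -{1}(subnK M1) mulnDl mul1n addnC.
have hc' : x K - (M - 1) * T - 1 < T by lia.
have [e1 e2] := @divuniq _ _ _ _ _ hc hc' E'.
have e3 : a * N + b = (M - 1) * N + (K - 1) by lia.
have hK' : K - 1 < N by lia.
have [ea eb] := @divuniq _ _ _ _ _ hb hK' e3.
move=> j hj; split; [|split].
- move=> hjb; have := hi j hj ltac:(lia).
  have -> : M = a.+1 by lia. done.
- move=> ->; have -> : b.+1 = K by lia. nia.
- move=> hjb; have := low j hj; rewrite -ea; done.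
Qed.

End Comb.

Section D.
Local Open Scope nat_scope.
Lemma xi_pos N T x : (1 <= N)%N -> (1 <= T)%N ->
  (forall j, (1 <= j <= N)%N -> (0 < x j)%N) -> (0 < xi N T x)%N.
Proof.
move=> hN hT pos; have [K1 _] := @Kprop N T hN hT x.
have := pos _ K1; rewrite /xi => h; apply: (leq_trans h); exact: leq_addl.
Qed.

Lemma decomp N T s : (1 <= N)%N -> (1 <= T)%N ->
  exists a b c, [/\ (b < N)%N, (c < T)%N & s = ((N * a + b) * T + c)%N].
Proof.
move=> hN hT; exists ((s %/ T) %/ N), ((s %/ T) %% N), (s %% T).
split; [by rewrite ltn_pmod | by rewrite ltn_pmod |].
by rewrite [in LHS](divn_eq s T) [in LHS](divn_eq (s %/ T) N) (mulnC N).
Qed.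

End D.
From mathcomp Require Import ring.

Section Meas.
Variables (d : measure_display) (Omega : measurableType d) (R : realType)
  (P : probability Omega R) (N T : nat) (p : R)
  (tau : nat -> Omega -> nat).
Hypotheses (hN : (1 <= N)%N) (hT : (1 <= T)%N) (hp : 0 < p <= 1)
  (hmeas : forall j, (1 <= j <= N)%N -> measurable_fun setT (tau j))
  (hind : mutually_independent P N tau)
  (hgeo : forall j, (1 <= j <= N)%N -> forall t : nat,
            P [set w | (t < tau j w)%N] = ((1 - p) ^+ t)%:E).

Let q := 1 - p.

Lemma mtau j A : (1 <= j <= N)%N -> measurable (tau j @^-1` A).
Proof.
move=> hj; rewrite -[_ @^-1` _]setTI; apply: (hmeas j hj) => //.
Qed.

Lemma mprod (A : nat -> set nat) :
  measurable [set w | forall j, (1 <= j <= N)%N -> A j (tau j w)].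
Proof.
have -> : [set w | forall j, (1 <= j <= N)%N -> A j (tau j w)] =
  \bigcap_(j in [set j | (1 <= j <= N)%N]) (tau j @^-1` A j).
  by apply/seteqP; split => w /= H j; apply: H.
apply: bigcap_measurable; first by exists 1%N => /=; rewrite hN.
by move=> j hj; apply: mtau.
Qed.

Definition vf (v : {ffun 'I_N -> nat}) (i : nat) : nat :=
  if (insub i : option 'I_N) is Some o then v o else 0%N.

Definition vec w : {ffun 'I_N -> nat} := [ffun j : 'I_N => tau j.+1 w].

Lemma vfE w j : (1 <= j <= N)%N -> vf (vec w) j.-1 = tau j w.
Proof.
move=> /andP [j1 jN]; have h : (j.-1 < N)%N by lia.
rewrite /vf; case: insubP => [u _ eu|]; last by rewrite h.
by rewrite /vec ffunE eu prednK.
Qed.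

Lemma mvec (Q : {ffun 'I_N -> nat} -> Prop) : measurable [set w | Q (vec w)].
Proof.
have -> : [set w | Q (vec w)] = \bigcup_(n in setT) (fun n =>
   match (unpickle n : option {ffun 'I_N -> nat}) with
   | Some v => if pselect (Q v) then
        [set w | forall j, (1 <= j <= N)%N -> [set vf v j.-1] (tau j w)] else set0
   | None => set0 end) n.
  apply/seteqP; split => w /=.
    move=> Qw; exists (pickle (vec w)) => //=; rewrite pickleK.
    case: pselect => // _ j hj /=; by rewrite vfE.
  move=> [n _]; case: (unpickle n) => // v; case: pselect => // Qv H.
  suff -> : vec w = v by [].
  apply/ffunP => u; rewrite /vec ffunE.
  have := H u.+1; rewrite /= ltn_ord /vf valK => -> //.
apply: bigcup_measurable => n _; case: (unpickle n) => // v.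
by case: pselect => hQ; [exact: (mprod (fun j => [set vf v j.-1])) | exact: measurable0].
Qed.

Lemma mxi (A : set nat) : measurable ((fun w => xi N T (fun j => tau j w)) @^-1` A).
Proof.
have -> : (fun w => xi N T (fun j => tau j w)) @^-1` A =
    [set w | (fun v => A (xi N T (fun j => vf v j.-1))) (vec w)].
  apply/seteqP; split => w /=;
  by rewrite (@xi_ext N T hN hT (fun j => tau j w) (fun j => vf (vec w) j.-1)) // => j hj; rewrite vfE.
exact: (mvec (fun v => A (xi N T (fun j => vf v j.-1)))).
Qed.


Lemma ptau j s : (1 <= j <= N)%N ->
  P (tau j @^-1` [set s]) = (if s is s'.+1 then q ^+ s' * p else 0)%:E.
Proof.
move=> hj.
have disj k : [set w | (k < tau j w)%N] = tau j @^-1` [set k.+1] `|` [set w | (k.+1 < tau j w)%N]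
   /\ tau j @^-1` [set k.+1] `&` [set w | (k.+1 < tau j w)%N] = set0.
  split; apply/seteqP; split => w /=.
  - by rewrite leq_eqVlt => /orP [/eqP ->|]; [left|right].
  - by case => [->|/ltnW].
  - by case => -> /[!ltnn].
  - by [].
have mS k : measurable [set w | (k < tau j w)%N].
  exact: (@mtau j [set t | (k < t)%N] hj).
case: s => [|s].
  have e1 : [set: Omega] = tau j @^-1` [set 0%N] `|` [set w | (0 < tau j w)%N].
    apply/seteqP; split => w //= _; by case: (tau j w); [left|right].
  have e2 : tau j @^-1` [set 0%N] `&` [set w | (0 < tau j w)%N] = set0.
    by apply/seteqP; split => w //= [-> ].
  have := probability_setT P; rewrite e1 measureU; [|exact: mtau|exact: mS|exact: e2].
  move=> h; have {}h : P (tau j @^-1` [set 0%N]) + P [set w | (0 < tau j w)%N] = 1%E := h.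
  rewrite (hgeo j hj) expr0 in h.
  have := congr1 (fun z : \bar R => (z - 1)%E) h; rewrite addeK // subee //.
have [e1 e2] := disj s.
have := hgeo j hj s; rewrite e1 measureU; [|exact: mtau|exact: mS|exact: e2].
move=> h; have {}h : (P (tau j @^-1` [set s.+1]) + P [set w | (s.+1 < tau j w)%N] = ((1 - p) ^+ s)%:E)%E := h.
rewrite (hgeo j hj) in h.
have := congr1 (fun z : \bar R => (z - (q ^+ s.+1)%:E)%E) h; rewrite addeK // -EFinB => ->.
by congr EFin; rewrite /q exprS; ring.
Qed.

Lemma lawsum (f : Omega -> nat) (mf : forall A, measurable (f @^-1` A)) A :
  (P (f @^-1` A) = \sum_(0 <= s <oo | s \in A) P (f @^-1` [set s]))%E.
Proof.
have -> : f @^-1` A = \bigcup_(s in A) f @^-1` [set s].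
  by apply/seteqP; split => w /=; [move=> h; exists (f w) | case=> s hs /= ->].
rewrite measure_bigcup //.
by move=> i j _ _ [w [/= <- <-]].
Qed.

Let G := [set w | forall j, (1 <= j <= N)%N -> [set t | (0 < t)%N] (tau j w)].

Lemma PnG : P (~` G) = 0.
Proof.
rewrite probability_setC; last exact: (mprod (fun _ => [set t | (0 < t)%N])).
rewrite /G (hind (fun _ => [set t | (0 < t)%N])).
rewrite big_nat_cond big1 ?subee // => j /andP [hj _].
have h := hgeo j hj 0; rewrite expr0 in h; exact: h.
Qed.


Let X s := (fun w => xi N T (fun j => tau j w)) @^-1` [set s].

Lemma mG : measurable G.
Proof. exact: (mprod (fun _ => [set t | (0 < t)%N])). Qed.

Lemma pxi0 : P (X 0%N) = 0.
Proof.
apply/eqP; rewrite eq_le measure_ge0 andbT -PnG.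
apply: le_measure; rewrite ?inE; [exact: mxi | apply: measurableC; exact: mG |].
move=> w /= Xw Gw; have := @xi_pos N T (fun j => tau j w) hN hT Gw.
by rewrite Xw.
Qed.

Definition Aj (a b c : nat) (j : nat) : set nat :=
  if (j <= b)%N then [set t | (a.+1 * T < t)%N]
  else if j == b.+1 then [set (a * T + c.+1)%N] else [set t | (a * T < t)%N].

Lemma AjE a b c j t : Aj a b c j t <->
  ((j <= b -> a.+1 * T < t) /\ (j = b.+1 -> t = a * T + c.+1) /\ (b.+1 < j -> a * T < t))%N.
Proof.
rewrite /Aj; case: ifP => h1; last case: eqP => h2 /=.
- split; [move=> h; split => //; split; lia | by case=> h _; apply: h].
- split; [move=> h; split; [lia|split => //; lia] | by case=> _ [h _]; apply: h].
- split; [move=> h; split; [lia|split => //; lia] | by case=> _ [_ h]; apply: h; lia].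
Qed.


Lemma PE a b c : (b < N)%N -> (c < T)%N ->
  P [set w | forall j, (1 <= j <= N)%N -> Aj a b c j (tau j w)]
  = (q ^+ ((N * a + b) * T + c) * p)%:E.
Proof.
move=> hb hc.
pose f j := if (j <= b)%N then q ^+ (a.+1 * T)
  else if j == b.+1 then q ^+ (a * T + c) * p else q ^+ (a * T).
rewrite (hind (Aj a b c)).
have -> : (\prod_(1 <= j < N.+1) P (tau j @^-1` Aj a b c j))%E
    = (\prod_(1 <= j < N.+1) (f j)%:E)%E.
  apply: eq_big_nat => j; rewrite ltnS => hj.
  rewrite /Aj /f; case: ifP => _; first exact: hgeo.
  case: ifP => _; last exact: hgeo.
  by rewrite addnS ptau.
rewrite prodEFin; congr EFin.
rewrite (@big_cat_nat _ _ _ b.+1) //; last lia.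
rewrite (@big_ltn _ _ _ b.+1 N.+1) /=; last lia.
have e1 : \prod_(1 <= i < b.+1) f i = \prod_(1 <= i < b.+1) q ^+ (a.+1 * T).
  by apply: eq_big_nat => i /andP [_ hi]; rewrite /f ifT.
have e2 : \prod_(b.+2 <= i < N.+1) f i = \prod_(b.+2 <= i < N.+1) q ^+ (a * T).
  apply: eq_big_nat => i /andP [hi _]; rewrite /f ifF; last lia.
  rewrite ifF //; apply/negbTE; rewrite neq_ltn hi orbT //.
rewrite e1 e2 !prodr_const_nat /f ltnn eqxx /= -!exprM.
have -> : ((N * a + b) * T + c = a.+1 * T * (b.+1 - 1) + (a * T + c) + a * T * (N.+1 - b.+2))%N.
  nia.
rewrite !exprD; ring.
Qed.


Lemma pxiS s : P (X s.+1) = (q ^+ s * p)%:E.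
Proof.
have [a [b [c [hb hc es]]]] := @decomp N T s hN hT.
pose E := [set w | forall j, (1 <= j <= N)%N -> Aj a b c j (tau j w)].
have mE : measurable E := mprod (Aj a b c).
have hE : E `<=` X s.+1.
  move=> w Ew; rewrite /X /= (@xi_fwd N T hN hT (fun j => tau j w) a b c hb hc).
    by rewrite es addnS.
  move=> j hj; exact/AjE/Ew.
have hX : X s.+1 `<=` E `|` ~` G.
  move=> w Xw; case: (pselect (G w)) => Gw; [left|by right].
  move=> j hj; apply/AjE.
  apply: (@xi_bwd N T hN hT (fun j => tau j w) a b c Gw hb hc) => //.
  by move: Xw; rewrite /X /= => ->; rewrite es addnS.
have PE' := PE a b c hb hc; rewrite -/E -es in PE'.
apply/eqP; rewrite eq_le; apply/andP; split.
- apply: (@le_trans _ _ (P (E `|` ~` G))).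
    by apply: le_measure; rewrite ?inE //; [exact: mxi | apply: measurableU => //; apply: measurableC; exact: mG].
  have h2 : (P (E `|` ~` G) <= P E + P (~` G))%E := measureU2 P mE (measurableC mG).
  by rewrite PnG adde0 PE' in h2.
- rewrite -PE'; apply: le_measure; rewrite ?inE //; exact: mxi.
Qed.

Lemma main A : P ((fun w => xi N T (fun j => tau j w)) @^-1` A) = P (tau 1%N @^-1` A).
Proof.
have h1 : (1 <= 1 <= N)%N by rewrite hN.
rewrite (lawsum _ mxi) (lawsum _ (fun B => mtau 1 B h1)).
apply: eq_eseriesr => s _; case: s => [|s].
  by rewrite ptau //; exact: pxi0.
by rewrite ptau //; exact: pxiS.
Qed.

End Meas.

Theorem lemma1 (d : measure_display) (Omega : measurableType d) (R : realType)
  (P : probability Omega R) (N Tpoll : nat) (p : R)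
  (tau : nat -> Omega -> nat)
  (hN : (1 <= N)%N) (hT : (1 <= Tpoll)%N) (hp : 0 < p <= 1)
  (hmeas : forall j, (1 <= j <= N)%N -> measurable_fun setT (tau j))
  (hind : mutually_independent P N tau)
  (hgeo : forall j, (1 <= j <= N)%N -> forall t : nat,
            P [set w | (t < tau j w)%N] = ((1 - p) ^+ t)%:E) :
  forall A : set nat,
    P ((fun w => xi N Tpoll (fun j => tau j w)) @^-1` A) = P (tau 1%N @^-1` A).
Proof.
move=> A; exact: (@main d Omega R P N Tpoll p tau hN hT hp hmeas hind hgeo A).
Qed.
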